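(* Let $M=M^T\in\mathbb{R}^{3\times3}$ be positive definite, let $m_0$ satisfy $\lambda_{\min}(M)\le m_0\le\lambda_{\max}(M)$, let $\lambda>0$, and let $K_r=K_r^T\in\mathbb{R}^{4\times4}$ be positive definite. For $q=[q_0,\vec q^{\,T}]^T\in\mathcal{S}^3$ and $\dot q\in\mathbb{R}^4$ with $q^T\dot q=0$ set $\omega=2J^T(q)\dot q$, $$D(q)=J(q)MJ^T(q)+m_0qq^T,\qquad C(q,\dot q)=-J(q)(M\omega)^{\wedge}J^T(q)-D(q)Q(\dot q)Q^T(q),$$ and $s(\bar g)=\dot q+\lambda(q_0q-\bar 1)$ for $\bar g=(q,\dot q)$, with $\bar 1=[1,0,0,0]^T$. Consider the Lagrangian system $D(q)\ddot q+C(q,\dot q)\dot q=\bar\tau$ with configuration manifold $\mathcal{S}^3$, in closed loop with $$\bar\tau=-\lambda\Big(D(q)\big(q_0\dot q+\dot q_0q\big)+C(q,\dot q)\big(q_0q-\bar 1\big)\Big)-K_r\,s(\bar g).$$ Then the equilibrium $s(\bar g)=0_{4\times1}$ is globally exponentially stable: there exist constants $k,\gamma>0$ such that every closed-loop solution $q:[t_0,\infty)\to\mathcal{S}^3$ satisfies $\|s(t)\|\le k\,\|s(t_0)\|\,e^{-\gamma(t-t_0)}$ for all $t\ge t_0$.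
   Context: Notation: for $u\in\mathbb{R}^3$, $u^{\wedge}$ is the skew-symmetric matrix with $u^{\wedge}v=u\times v$. For $x=[x_0,\vec x^{\,T}]^T\in\mathbb{R}^4$: $J(x)=\begin{bmatrix}-\vec x^{\,T}\\ x_0I_3+\vec x^{\wedge}\end{bmatrix}\in\mathbb{R}^{4\times3}$ and $Q(x)=\begin{bmatrix}x_0&-\vec x^{\,T}\\ \vec x& x_0I_3+\vec x^{\wedge}\end{bmatrix}$. $\dot q_0$ is the time derivative of the scalar part $q_0$. The Lagrangian system describes rigid-body rotational motion $\dot q=\tfrac12J(q)\omega$, $M\dot\omega=(M\omega)^\wedge\omega+\tau$ with $\bar\tau=\tfrac12J(q)\tau$; $\lambda_{\min}(M),\lambda_{\max}(M)$ are the extreme eigenvalues of $M$. *)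

(* Defs.v *)
From HB Require Import structures.
From mathcomp Require Import all_boot all_order all_algebra.
From mathcomp Require Import all_classical all_reals all_analysis.
Set Implicit Arguments. Unset Strict Implicit. Unset Printing Implicit Defensive.
Import Order.TTheory GRing.Theory Num.Theory.
Import numFieldNormedType.Exports.
Local Open Scope ring_scope.
Local Open Scope classical_set_scope.

Section Defs.
Variable R : realType.

Definition q_sc (x : 'cV[R]_4) : R := x ord0 ord0.
Definition q_vecp (x : 'cV[R]_4) : 'cV[R]_3 := \col_(i < 3) x (lift ord0 i) ord0.

(* u^ : skew-symmetric matrix with u^ v = u x v *)
Definition q_hat (u : 'cV[R]_3) : 'M[R]_3 :=
  let c (k : nat) := u (@inord 2 k) ord0 in
  \matrix_(i < 3, j < 3)
    match nat_of_ord i, nat_of_ord j with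
    | 0, 1 => - c 2%N | 0, 2 => c 1%N
    | 1, 0 => c 2%N   | 1, 2 => - c 0%N
    | 2, 0 => - c 1%N | 2, 1 => c 0%N
    | _, _ => 0
    end.

Definition q_Jm (x : 'cV[R]_4) : 'M[R]_(4, 3) :=
  col_mx (- ((q_vecp x)^T)) ((q_sc x)%:M + q_hat (q_vecp x)).

Definition q_Qm (x : 'cV[R]_4) : 'M[R]_4 :=
  block_mx ((q_sc x)%:M : 'M[R]_1) (- ((q_vecp x)^T)) (q_vecp x) ((q_sc x)%:M + q_hat (q_vecp x)).

Definition q_one4 : 'cV[R]_4 := delta_mx ord0 ord0.

Definition q_enorm n (v : 'cV[R]_n) : R := Num.sqrt (\sum_(i < n) v i ord0 ^+ 2).

Definition sym_posdef n (A : 'M[R]_n) : Prop :=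
  A^T = A /\ forall x : 'cV[R]_n, x != 0 -> 0 < (x^T *m A *m x) ord0 ord0.

Definition q_omg (q dq : 'cV[R]_4) : 'cV[R]_3 := 2%:R *: ((q_Jm q)^T *m dq).

Definition q_Dm (M : 'M[R]_3) (m0 : R) (q : 'cV[R]_4) : 'M[R]_4 :=
  q_Jm q *m M *m (q_Jm q)^T + m0 *: (q *m q^T).

Definition q_Cm (M : 'M[R]_3) (m0 : R) (q dq : 'cV[R]_4) : 'M[R]_4 :=
  - (q_Jm q *m q_hat (M *m q_omg q dq) *m (q_Jm q)^T) - q_Dm M m0 q *m q_Qm dq *m (q_Qm q)^T.

Definition s_of (lam : R) (q dq : 'cV[R]_4) : 'cV[R]_4 :=
  dq + lam *: (q_sc q *: q - q_one4).

Definition q_tau_cl (M : 'M[R]_3) (m0 lam : R) (Kr : 'M[R]_4) (q dq : 'cV[R]_4)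
  : 'cV[R]_4 :=
  - (lam *: (q_Dm M m0 q *m (q_sc q *: dq + q_sc dq *: q)
             + q_Cm M m0 q dq *m (q_sc q *: q - q_one4)))
  - Kr *m s_of lam q dq.

Definition closed_loop_solution (M : 'M[R]_3) (m0 lam : R) (Kr : 'M[R]_4)
  (t0 : R) (q dq ddq : R -> 'cV[R]_4) : Prop :=
  [/\ (forall t, t0 < t -> forall i : 'I_4,
          is_derive t 1 (fun u => q u i ord0) (dq t i ord0) /\
          is_derive t 1 (fun u => dq u i ord0) (ddq t i ord0)),
      (forall i : 'I_4,
          {within [set u : R | t0 <= u], continuous (fun u => q u i ord0)} /\
          {within [set u : R | t0 <= u], continuous (fun u => dq u i ord0)}),
      (forall t, t0 <= t -> q_enorm (q t) = 1) &
      (forall t, t0 < t ->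
          q_Dm M m0 (q t) *m ddq t + q_Cm M m0 (q t) (dq t) *m dq t
          = q_tau_cl M m0 lam Kr (q t) (dq t))].

End Defs.

(* Main.v *)
Require Import Defs.
From HB Require Import structures.
From mathcomp Require Import all_boot all_order all_algebra.
From mathcomp Require Import all_classical all_reals all_analysis.
From mathcomp Require Import ring lra.
Import Order.TTheory GRing.Theory Num.Theory.
Local Open Scope ring_scope.

Section Alg.
Import numFieldNormedType.Exports.
Local Open Scope classical_set_scope.
Local Set Implicit Arguments. Local Unset Strict Implicit.
Variable R : realType.

Definition e4 (x : 'cV[R]_4) (k : nat) : R := x (inord k) ord0.
Definition e33 (A : 'M[R]_3) (a b : nat) : R := A (inord a) (inord b).

Lemma e4E (x : 'cV[R]_4) i j : x i j = e4 x i.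
Proof. by rewrite /e4 inord_val (ord1 j). Qed.
Lemma e33E (A : 'M[R]_3) i j : A i j = e33 A i j.
Proof. by rewrite /e33 !inord_val. Qed.

Lemma colE1 n m2 (A1 : 'M[R]_(1,n)) (A2 : 'M[R]_(m2.+1,n)) (i : 'I_(1 + m2.+1)) j :
  col_mx A1 A2 i j = if (i : nat) == 0%N then A1 0 j else A2 (inord i.-1) j.
Proof.
rewrite mxE; case: splitP => k /= Hk.
  by rewrite Hk (ord1 k).
by rewrite Hk /= inord_val.
Qed.

Lemma rowE1 n m2 (A1 : 'M[R]_(n,1)) (A2 : 'M[R]_(n,m2.+1)) (i : 'I_(1 + m2.+1)) j :
  row_mx A1 A2 j i = if (i : nat) == 0%N then A1 j 0 else A2 j (inord i.-1).
Proof.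
rewrite mxE; case: splitP => k /= Hk.
  by rewrite Hk (ord1 k).
by rewrite Hk /= inord_val.
Qed.

Lemma inord_eq n a b : (a < n.+1)%N -> (b < n.+1)%N -> (inord a == inord b :> 'I_n.+1) = (a == b).
Proof. by move=> ha hb; rewrite -val_eqE /= !inordK. Qed.

Lemma inord_eqO n a (j : 'I_n.+1) : (a < n.+1)%N -> (inord a == j) = (a == j).
Proof. by move=> ha; rewrite -val_eqE /= !inordK. Qed.

Lemma q_scE (x : 'cV[R]_4) : q_sc x = e4 x 0.
Proof. by rewrite /q_sc e4E. Qed.

Ltac o4 i := let H := fresh "H" in case: i => [[|[|[|[|i]]]] H]; last by [].
Ltac o3 i := let H := fresh "H" in case: i => [[|[|[|i]]] H]; last by [].

Definition QE (x : 'cV[R]_4) (i j : nat) : R :=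
  let a := e4 x 0 in let b := e4 x 1 in let c := e4 x 2 in let d := e4 x 3 in
  match i, j with
  | 0,0 => a | 0,1 => -b | 0,2 => -c | 0,3 => -d
  | 1,0 => b | 1,1 => a | 1,2 => -d | 1,3 => c
  | 2,0 => c | 2,1 => d | 2,2 => a | 2,3 => -b
  | 3,0 => d | 3,1 => -c | 3,2 => b | 3,3 => a
  | _,_ => 0 end.

Lemma q_QmE (x : 'cV[R]_4) i j : q_Qm x i j = QE x i j.
Proof.
rewrite /q_Qm /block_mx colE1 !rowE1.
o4 i; o4 j; rewrite /QE /= ?mxE /= ?mxE /= ?e4E /=.
all: try rewrite !inordK //=.
all: try rewrite !mxE /= !e4E /=.
all: try rewrite !inordK //=.
all: rewrite ?q_scE /bump /= ?inord_eq //= ?mulr1n ?mulr0n ?addr0 ?add0r ?sub0r //.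
Qed.

Lemma q_JmE (x : 'cV[R]_4) i (j : 'I_3) : q_Jm x i j = QE x i j.+1.
Proof.
rewrite /q_Jm colE1.
o4 i; o3 j; rewrite /QE /= ?mxE /= ?mxE /= ?e4E /=.
all: try rewrite !inordK //=.
all: try rewrite !mxE /= !e4E /=.
all: try rewrite !inordK //=.
all: rewrite ?q_scE /bump /addn /= ?inord_eq ?inord_eqO //= ?mulr1n ?mulr0n ?addr0 ?add0r ?sub0r //.
Qed.

Definition nsq n (x : 'cV[R]_n) : R := (x^T *m x) 0 0.
Definition Nm (M : 'M[R]_3) (m0 : R) : 'M[R]_4 := block_mx (m0%:M : 'M[R]_1) 0 0 M.

Lemma NmE M m0 (i j : 'I_4) : Nm M m0 i j =
  if ((i : nat) == 0%N) && ((j : nat) == 0%N) then m0 else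
  if ((i : nat) == 0%N) || ((j : nat) == 0%N) then 0 else e33 M i.-1 j.-1.
Proof.
rewrite /Nm /block_mx colE1 !rowE1.
o4 i; o4 j; rewrite /= ?mxE //= /e33 //.
Qed.

Definition e3 (y : 'cV[R]_3) (k : nat) : R := y (inord k) ord0.
Lemma e3E (y : 'cV[R]_3) i j : y i j = e3 y i.
Proof. by rewrite /e3 inord_val (ord1 j). Qed.

Ltac norm := rewrite ?e4E ?e3E ?e33E; rewrite ?inordK //=; try (rewrite /bump); try (rewrite /addn); rewrite /=.
Ltac bexp := rewrite ?mxE /=; rewrite ?big_ord_recl ?big_ord0 /= ?mxE /=;
  rewrite ?big_ord_recl ?big_ord0 /= ?mxE /=; rewrite ?big_ord_recl ?big_ord0 /= ?mxE /=.
Ltac mxring := apply/matrixP => i j; bexp.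

Lemma I1 (x : 'cV[R]_4) : (q_Qm x)^T *m q_Qm x = nsq x *: 1%:M.
Proof.
rewrite /nsq; move: (q_Qm x) (q_QmE x) => Q HQ.
mxring; rewrite ?HQ; norm.
o4 i; o4 j; rewrite /QE /=; ring.
Qed.


Lemma I2 (x y : 'cV[R]_4) :
  q_Qm x *m (q_Qm y)^T + q_Qm y *m (q_Qm x)^T = (2 * (x^T *m y) 0 0) *: 1%:M.
Proof.
move: (q_Qm x) (q_QmE x) (q_Qm y) (q_QmE y) => Qx HQx Qy HQy.
mxring; rewrite ?HQx ?HQy; norm.
o4 i; o4 j; rewrite /QE /=; ring.
Qed.

Lemma I3 (y u : 'cV[R]_3) : (y^T *m q_hat u *m y) 0 0 = 0.
Proof.
rewrite !mxE; rewrite ?big_ord_recl ?big_ord0 /= ?mxE /=.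
rewrite ?big_ord_recl ?big_ord0 /= ?mxE /=.
norm; ring.
Qed.

Lemma I4 M m0 (x : 'cV[R]_4) :
  q_Dm M m0 x = q_Qm x *m Nm M m0 *m (q_Qm x)^T.
Proof.
rewrite /q_Dm.
move: (q_Qm x) (q_QmE x) (q_Jm x) (q_JmE x) (Nm M m0) (NmE M m0) => Q HQ J HJ N HN.
mxring; rewrite ?HQ ?HJ ?HN; norm.
o4 i; o4 j; rewrite /QE /=; ring.
Qed.

Lemma I6 M m0 (z : 'cV[R]_4) :
  (z^T *m Nm M m0 *m z) 0 0 = m0 * e4 z 0 ^+ 2 + ((q_vecp z)^T *m M *m q_vecp z) 0 0.
Proof.
move: (Nm M m0) (NmE M m0) => N HN.
rewrite !mxE; rewrite ?big_ord_recl ?big_ord0 /= ?mxE /=.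
rewrite ?big_ord_recl ?big_ord0 /= ?mxE /=.
rewrite ?HN; norm; ring.
Qed.

Lemma I7 (z : 'cV[R]_4) : nsq z = e4 z 0 ^+ 2 + nsq (q_vecp z).
Proof.
rewrite /nsq !mxE; rewrite ?big_ord_recl ?big_ord0 /= ?mxE /=.
norm; ring.
Qed.

Lemma I8 M m0 : M^T = M -> (Nm M m0)^T = Nm M m0.
Proof.
move=> hM; have hs a b : e33 M a b = e33 M b a by rewrite /e33 -{1}hM mxE.
apply/matrixP => i j; rewrite mxE !NmE.
by o4 i; o4 j; rewrite //= hs.
Qed.


Lemma I2' (x : 'cV[R]_4) : q_Qm x *m (q_Qm x)^T = nsq x *: 1%:M.
Proof.
rewrite /nsq; move: (q_Qm x) (q_QmE x) => Q HQ.
mxring; rewrite ?HQ; norm.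
o4 i; o4 j; rewrite /QE /=; ring.
Qed.

Lemma trsc (A : 'M[R]_1) : A 0 0 = A^T 0 0.
Proof. by rewrite mxE. Qed.

Lemma entB m n (A B : 'M[R]_(m,n)) i j : (A - B) i j = A i j - B i j.
Proof. by rewrite !mxE. Qed.
Lemma entN m n (A : 'M[R]_(m,n)) i j : (- A) i j = - A i j.
Proof. by rewrite !mxE. Qed.
Lemma entD m n (A B : 'M[R]_(m,n)) i j : (A + B) i j = A i j + B i j.
Proof. by rewrite !mxE. Qed.

Lemma stepB (D C K : 'M[R]_4) (ddq dq v w : 'cV[R]_4) lam :
  D *m ddq + C *m dq = -(lam *: (D *m v + C *m w)) - K *m (dq + lam *: w) ->
  D *m (ddq + lam *: v) = -(C *m (dq + lam *: w)) - K *m (dq + lam *: w).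
Proof.
move=> E.
have E2 : D *m ddq = -(lam *: (D *m v + C *m w)) - K *m (dq + lam *: w) - C *m dq.
  by rewrite -E addrK.
rewrite mulmxDr E2.
move: (K *m (dq + lam *: w)) => X.
rewrite !mulmxDr -!scalemxAr.
move: (D *m v) (C *m w) (C *m dq) => a b c.
by apply/matrixP => i j; rewrite !mxE; ring.
Qed.

Lemma key (M : 'M[R]_3) m0 lam Kr (q dq ddq : 'cV[R]_4) :
  M^T = M -> nsq q = 1 -> (q^T *m dq) 0 0 = 0 ->
  q_Dm M m0 q *m ddq + q_Cm M m0 q dq *m dq = q_tau_cl M m0 lam Kr q dq ->
  let s := s_of lam q dq in
  let s' := ddq + lam *: (q_sc q *: dq + q_sc dq *: q) in
  let D := q_Qm q *m Nm M m0 *m (q_Qm q)^T in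
  let D' := q_Qm dq *m Nm M m0 *m (q_Qm q)^T + q_Qm q *m Nm M m0 *m (q_Qm dq)^T in
  (s'^T *m D *m s + s^T *m D' *m s + s^T *m D *m s') 0 0 = -2 * (s^T *m Kr *m s) 0 0.
Proof.
move=> hM hq hqd E s s' D D'.
have hD : q_Dm M m0 q = D by rewrite I4.
have NT := I8 m0 hM.
have DT : D^T = D by rewrite /D !trmx_mul trmxK NT mulmxA.
have QtQ : (q_Qm q)^T *m q_Qm q = 1%:M by rewrite I1 hq scale1r.
have e2 : q_Qm dq *m Nm M m0 *m (q_Qm q)^T = (q_Qm dq *m (q_Qm q)^T) *m D.
  by rewrite /D -[q_Qm dq in LHS]mulmx1 -QtQ !mulmxA.
have WT : (q_Qm dq *m (q_Qm q)^T)^T = - (q_Qm dq *m (q_Qm q)^T).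
  rewrite trmx_mul trmxK.
  apply/eqP; rewrite -addr_eq0 I2 hqd mulr0 scale0r //.
have e1 : (s^T *m (q_Qm q *m Nm M m0 *m (q_Qm dq)^T) *m s) 0 0
        = (s^T *m (q_Qm dq *m Nm M m0 *m (q_Qm q)^T) *m s) 0 0.
  by rewrite trsc !trmx_mul !trmxK NT !mulmxA.
have hD' : (s^T *m D' *m s) 0 0 = 2 * (s^T *m (q_Qm dq *m Nm M m0 *m (q_Qm q)^T) *m s) 0 0.
  by rewrite /D' mulmxDr mulmxDl mxE e1; ring.
rewrite e2 in hD'.
set C := q_Cm M m0 q dq.
have Ds' : D *m s' = -(C *m s) - Kr *m s.
  rewrite /s' /s /s_of; apply: stepB; rewrite -hD E /q_tau_cl /s_of //.
have t3 : (s^T *m C *m s) 0 0 = - (s^T *m D *m (q_Qm dq *m (q_Qm q)^T) *m s) 0 0.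
  rewrite /C /q_Cm hD.
  have -> : s^T *m (-(q_Jm q *m q_hat (M *m q_omg q dq) *m (q_Jm q)^T) - D *m q_Qm dq *m (q_Qm q)^T) *m s
     = - (((q_Jm q)^T *m s)^T *m q_hat (M *m q_omg q dq) *m ((q_Jm q)^T *m s))
       - s^T *m D *m (q_Qm dq *m (q_Qm q)^T) *m s.
    by rewrite mulmxBr mulmxBl !mulmxN !mulNmx trmx_mul trmxK !mulmxA.
  by rewrite entB entN I3 oppr0 sub0r.
move: hD' t3 Ds' WT.
move: (q_Qm dq *m (q_Qm q)^T) => W.
clearbody D s s' C; move=> hD' t3 Ds' WT.
have t1 : (s'^T *m D *m s) 0 0 = (s^T *m D *m s') 0 0.
  by rewrite trsc !trmx_mul !trmxK DT mulmxA.
have e3 : (s^T *m (W *m D) *m s) 0 0 = - (s^T *m D *m W *m s) 0 0.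
  by rewrite trsc !trmx_mul !trmxK DT WT !mulmxN !mulNmx !mulmxN entN !mulmxA.
have t4 : (s^T *m D *m s') 0 0 = - (s^T *m C *m s) 0 0 - (s^T *m Kr *m s) 0 0.
  by rewrite -mulmxA Ds' mulmxBr mulmxN entB entN !mulmxA.
rewrite e3 in hD'.
rewrite 2!entD t1 hD' t4 t3; ring.
Qed.

End Alg.

Section Bnd.
Import numFieldNormedType.Exports.
Local Open Scope classical_set_scope.
Local Set Implicit Arguments. Local Unset Strict Implicit.
Variable R : realType.

Definition fq n (A : 'M[R]_n) (v : 'rV[R]_n) : R := (v *m A *m v^T) 0 0.

Lemma cont_sum k m (F : 'I_m -> 'rV[R]_k -> R) :
  (forall j, continuous (F j)) -> continuous (fun v => \sum_(j < m) F j v).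
Proof.
elim: m F => [|m IH] F hF.
  have -> : (fun v : 'rV[R]_k => \sum_(j < 0) F j v) = cst 0.
    by apply/funext => v; rewrite big_ord0.
  exact: cst_continuous.
have -> : (fun v => \sum_(j < m.+1) F j v) = (fun v => \sum_(j < m) F (widen_ord (leqnSn m) j) v) + F ord_max.
  by apply/funext => v; rewrite big_ord_recr.
move=> v; apply: continuousD; last exact: hF.
by apply: (IH (fun j => F (widen_ord (leqnSn m) j))) => j; exact: hF.
Qed.

Lemma cont_row k (B : 'M[R]_k) j : continuous (fun v : 'rV[R]_k => (v *m B) 0 j).
Proof.
have -> : (fun v : 'rV[R]_k => (v *m B) 0 j) = (fun v => \sum_(i < k) (fun i v => v 0 i * B i j) i v).
  by apply/funext => v; rewrite mxE.
apply: cont_sum => i v.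
apply: continuousM; first exact: coord_continuous.
exact: cst_continuous.
Qed.

Lemma cont_fq k (A : 'M[R]_k) : continuous (fq A).
Proof.
have -> : fq A = (fun v => \sum_(j < k) (fun j v => (v *m A) 0 j * v 0 j) j v).
  by apply: funext => v; rewrite /fq /= mxE; apply: eq_bigr => j _; rewrite [v^T _ _]mxE.
apply: cont_sum => j v.
apply: continuousM; first exact: cont_row.
exact: coord_continuous.
Qed.


Lemma entZ m n (a : R) (B : 'M[R]_(m,n)) i j : (a *: B) i j = a * B i j.
Proof. by rewrite mxE. Qed.

Lemma fqZ k (B : 'M[R]_k) a v : fq B (a *: v) = a ^+ 2 * fq B v.
Proof.
rewrite /fq.
have -> : (a *: v)^T = a *: v^T by apply/matrixP => i j; rewrite !mxE.
by rewrite -!scalemxAl -scalemxAr !entZ mulrA expr2.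
Qed.

Lemma fq1 k (v : 'rV[R]_k) : fq 1%:M v = \sum_i v 0 i ^+ 2.
Proof. by rewrite /fq mulmx1 mxE; apply: eq_bigr => i _; rewrite mxE expr2. Qed.

Lemma nsq_gt0 k (x : 'rV[R]_k) : x != 0 -> 0 < fq 1%:M x.
Proof.
move=> hx; rewrite fq1.
have [i hi] : exists i, x 0 i != 0.
  apply/existsP; apply: contraR hx; rewrite negb_exists => /forallP h.
  apply/eqP/matrixP => a b; rewrite (ord1 a) mxE; exact/eqP/negPn/h.
rewrite (bigD1 i) //=; apply: (@lt_le_trans _ _ (x 0 i ^+ 2)).
  by rewrite exprn_even_gt0 // hi orbT.
by rewrite lerDl sumr_ge0 // => j _; rewrite sqr_ge0.
Qed.

Lemma quad_bounds n (A : 'M[R]_n.+1) :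
  (forall x : 'cV[R]_n.+1, x != 0 -> 0 < (x^T *m A *m x) 0 0) ->
  exists c, exists C, 0 < c /\ forall x : 'cV[R]_n.+1,
    c * (x^T *m x) 0 0 <= (x^T *m A *m x) 0 0 /\ (x^T *m A *m x) 0 0 <= C * (x^T *m x) 0 0.
Proof.
move=> hA.
pose g := fq (1%:M : 'M[R]_n.+1).
pose S := [set v : 'rV[R]_n.+1 | g v = 1].
have S0 : S !=set0.
  exists (delta_mx 0 0); rewrite /S /g /= /fq mulmx1 trmx_delta mul_delta_mx mxE.
  by rewrite eqxx.
have Sc : compact S.
  apply: bounded_closed_compact.
    exists 1; split; first by rewrite num_real.
    move=> M hM v Sv /=.
    rewrite -[Num.norm v]/(mx_norm v) mx_normrE.
    apply: (big_ind (fun y => y <= M)) => //.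
    - by apply: ltW; apply: lt_trans hM.
    - by move=> a b ha hb; rewrite ge_max ha hb.
    - case=> a b _ /=; rewrite (ord1 a).
      have h1 : v 0 b ^+ 2 <= 1.
        rewrite -Sv /g fq1 (bigD1 b) //= lerDl sumr_ge0 // => j _.
        by rewrite sqr_ge0.
      have h2 : `|v 0 b| ^+ 2 = v 0 b ^+ 2 by rewrite real_normK // num_real.
      have h3 := normr_ge0 (v 0 b).
      apply: le_trans (ltW hM).
      rewrite -h2 in h1; rewrite expr2 in h1; nra.
  have -> : S = g @^-1` [set 1] by [].
  apply: preimage_closed; first by move=> x _; exact: cont_fq.
  exact: closed_eq.
have cf : {within S, continuous (fq A)} by apply: continuous_subspaceT; exact: cont_fq.
have [vm vmS hvm] := compact_EVT_min S0 Sc cf.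
have [vM vMS hvM] := compact_EVT_max S0 Sc cf.
exists (fq A vm), (fq A vM).
have key : forall x : 'cV[R]_n.+1, x != 0 -> exists2 v, v \in S &
    (x^T *m A *m x) 0 0 = (x^T *m x) 0 0 * fq A v.
  move=> x hx.
  have hxT : x^T != 0 by apply: contra hx => /eqP h; rewrite -[x]trmxK h trmx0.
  have gx := nsq_gt0 hxT.
  have egx : g x^T = (x^T *m x) 0 0 by rewrite /g /fq mulmx1 trmxK.
  set r := Num.sqrt (g x^T).
  have r0 : 0 < r by rewrite sqrtr_gt0.
  have r2 : r ^+ 2 = g x^T by rewrite sqr_sqrtr // ltW.
  exists (r^-1 *: x^T).
    rewrite inE /S /= /g fqZ -/g -r2 exprVn mulVf //.
    by rewrite expf_neq0 // gt_eqF.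
  rewrite fqZ exprVn r2 -egx mulrA mulfV ?gt_eqF // mul1r.
  by rewrite /fq trmxK.
split.
  have hne : vm^T != 0.
    apply/eqP => h; have e : vm = 0 by rewrite -[vm]trmxK h trmx0.
    move: vmS; rewrite inE /S /= /g e /fq !mul0mx mxE => /esym/eqP.
    by rewrite oner_eq0.
  have := hA _ hne; by rewrite trmxK.
move=> x; have [->|hx] := eqVneq x 0.
  by rewrite trmx0 !mul0mx !mxE !mulr0 lexx.
have [v vS ->] := key x hx.
have gx : 0 < (x^T *m x) 0 0.
  have hxT : x^T != 0 by apply: contra hx => /eqP h; rewrite -[x]trmxK h trmx0.
  by have := nsq_gt0 hxT; rewrite /fq mulmx1 trmxK.
split.
  by rewrite [X in X <= _]mulrC ler_pM2l //; exact: hvm.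
by rewrite [X in _ <= X]mulrC ler_pM2l //; exact: hvM.
Qed.

End Bnd.

Section Frame.
Import numFieldNormedType.Exports.
Local Open Scope classical_set_scope.
Local Set Implicit Arguments. Local Unset Strict Implicit.
Variable R : realType.
Implicit Types (f g : R -> R) (I : set R).

Definition cw I f := {within I, continuous f}.

Lemma cw_cst I (a : R) : cw I (fun _ => a).
Proof. by move=> x; exact: cst_continuous. Qed.

Lemma cwD I f g : cw I f -> cw I g -> cw I (fun u => f u + g u).
Proof. by move=> hf hg x; exact: (continuousD (hf x) (hg x)). Qed.

Lemma cwN I f : cw I f -> cw I (fun u => - f u).
Proof. by move=> hf x; exact: (continuousN (hf x)). Qed.

Lemma cwM I f g : cw I f -> cw I g -> cw I (fun u => f u * g u).
Proof. by move=> hf hg x; exact: (continuousM (hf x) (hg x)). Qed.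

Lemma cw_sum I n (F : 'I_n -> R -> R) : (forall k, cw I (F k)) ->
  cw I (fun u => \sum_(k < n) F k u).
Proof.
elim: n F => [|n IH] F hF.
  have -> : (fun u => \sum_(k < 0) F k u) = (fun _ => 0) by apply: funext => u; rewrite big_ord0.
  exact: cw_cst.
have -> : (fun u => \sum_(k < n.+1) F k u) =
   (fun u => \sum_(k < n) F (widen_ord (leqnSn n) k) u + F ord_max u).
  by apply: funext => u; rewrite big_ord_recr.
apply: cwD => //; exact: IH.
Qed.

Definition mc I m n (F : R -> 'M[R]_(m,n)) := forall i j, cw I (fun u => F u i j).

Lemma mc_cst I m n (A : 'M[R]_(m,n)) : mc I (fun _ => A).
Proof. by move=> i j; exact: cw_cst. Qed.

Lemma mcD I m n (F G : R -> 'M[R]_(m,n)) : mc I F -> mc I G -> mc I (fun u => F u + G u).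
Proof.
move=> hF hG i j.
have -> : (fun u => (F u + G u) i j) = (fun u => F u i j + G u i j) by apply: funext => u; rewrite mxE.
exact: cwD.
Qed.

Lemma mcN I m n (F : R -> 'M[R]_(m,n)) : mc I F -> mc I (fun u => - F u).
Proof.
move=> hF i j.
have -> : (fun u => (- F u) i j) = (fun u => - F u i j) by apply: funext => u; rewrite mxE.
exact: cwN.
Qed.

Lemma mcZ I m n f (F : R -> 'M[R]_(m,n)) : cw I f -> mc I F -> mc I (fun u => f u *: F u).
Proof.
move=> hf hF i j.
have -> : (fun u => (f u *: F u) i j) = (fun u => f u * F u i j) by apply: funext => u; rewrite mxE.
exact: cwM.
Qed.

Lemma mcT I m n (F : R -> 'M[R]_(m,n)) : mc I F -> mc I (fun u => (F u)^T).
Proof.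
move=> hF i j.
have -> : (fun u => (F u)^T i j) = (fun u => F u j i) by apply: funext => u; rewrite mxE.
exact: hF.
Qed.

Lemma mcM I m n p (F : R -> 'M[R]_(m,n)) (G : R -> 'M[R]_(n,p)) :
  mc I F -> mc I G -> mc I (fun u => F u *m G u).
Proof.
move=> hF hG i j.
have -> : (fun u => (F u *m G u) i j) = (fun u => \sum_k (fun k u => F u i k * G u k j) k u).
  by apply: funext => u; rewrite mxE.
apply: cw_sum => k; exact: cwM.
Qed.

Lemma isdD t f g a b : is_derive t (1:R) f a -> is_derive t (1:R) g b ->
  is_derive t (1:R) (fun u => f u + g u) (a + b).
Proof. by move=> hf hg; exact: (is_deriveD hf hg). Qed.

Lemma isdN t f a : is_derive t (1:R) f a -> is_derive t (1:R) (fun u => - f u) (- a).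
Proof. by move=> hf; exact: (is_deriveN hf). Qed.

Lemma isdM t f g a b : is_derive t (1:R) f a -> is_derive t (1:R) g b ->
  is_derive t (1:R) (fun u => f u * g u) (f t * b + g t * a).
Proof. by move=> hf hg; exact: (is_deriveM hf hg). Qed.

Lemma isd_cst t (c : R) : is_derive t (1:R) (fun _ => c) 0.
Proof. exact: is_derive_cst. Qed.

Lemma isd_sum t n (F : 'I_n -> R -> R) (dF : 'I_n -> R) :
  (forall k, is_derive t (1:R) (F k) (dF k)) ->
  is_derive t (1:R) (fun u => \sum_(k < n) F k u) (\sum_(k < n) dF k).
Proof.
elim: n F dF => [|n IH] F dF hF.
  have -> : (fun u => \sum_(k < 0) F k u) = (fun _ => 0) by apply: funext => u; rewrite big_ord0.
  rewrite big_ord0; exact: isd_cst.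
have -> : (fun u => \sum_(k < n.+1) F k u) =
   (fun u => \sum_(k < n) F (widen_ord (leqnSn n) k) u + F ord_max u).
  by apply: funext => u; rewrite big_ord_recr.
rewrite big_ord_recr; apply: isdD => //; exact: IH.
Qed.

Definition md m n (t : R) (F : R -> 'M[R]_(m,n)) (F' : 'M[R]_(m,n)) :=
  forall i j, is_derive t (1:R) (fun u => F u i j) (F' i j).

Lemma md_cst m n t (A : 'M[R]_(m,n)) : md t (fun _ => A) 0.
Proof. by move=> i j; rewrite mxE; exact: isd_cst. Qed.

Lemma mdD m n t (F G : R -> 'M[R]_(m,n)) F' G' : md t F F' -> md t G G' ->
  md t (fun u => F u + G u) (F' + G').
Proof.
move=> hF hG i j.
have -> : (fun u => (F u + G u) i j) = (fun u => F u i j + G u i j) by apply: funext => u; rewrite mxE.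
rewrite mxE; exact: isdD.
Qed.

Lemma mdN m n t (F : R -> 'M[R]_(m,n)) F' : md t F F' -> md t (fun u => - F u) (- F').
Proof.
move=> hF i j.
have -> : (fun u => (- F u) i j) = (fun u => - F u i j) by apply: funext => u; rewrite mxE.
rewrite mxE; exact: isdN.
Qed.

Lemma mdZ m n t f a (F : R -> 'M[R]_(m,n)) F' : is_derive t (1:R) f a -> md t F F' ->
  md t (fun u => f u *: F u) (f t *: F' + a *: F t).
Proof.
move=> hf hF i j.
have -> : (fun u => (f u *: F u) i j) = (fun u => f u * F u i j) by apply: funext => u; rewrite mxE.
rewrite !mxE [a * _]mulrC; exact: (isdM hf (hF i j)).
Qed.

Lemma mdT m n t (F : R -> 'M[R]_(m,n)) F' : md t F F' -> md t (fun u => (F u)^T) F'^T.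
Proof.
move=> hF i j.
have -> : (fun u => (F u)^T i j) = (fun u => F u j i) by apply: funext => u; rewrite mxE.
rewrite mxE; exact: hF.
Qed.

Lemma mdM m n p t (F : R -> 'M[R]_(m,n)) (G : R -> 'M[R]_(n,p)) F' G' :
  md t F F' -> md t G G' -> md t (fun u => F u *m G u) (F' *m G t + F t *m G').
Proof.
move=> hF hG i j.
have -> : (fun u => (F u *m G u) i j) = (fun u => \sum_k (fun k u => F u i k * G u k j) k u).
  by apply: funext => u; rewrite mxE.
rewrite !mxE -big_split /=.
apply: isd_sum => k.
have := isdM (hF i k) (hG k j).
by rewrite addrC [F' i k * _]mulrC.
Qed.

End Frame.


Section Main.
Import numFieldNormedType.Exports.
Local Open Scope classical_set_scope.
Local Set Implicit Arguments. Local Unset Strict Implicit.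
Variable R : realType.

Ltac o4 i := let H := fresh "H" in case: i => [[|[|[|[|i]]]] H]; last by [].

Lemma mcQ (I : set R) (x : R -> 'cV[R]_4) : mc I x -> mc I (fun u => q_Qm (x u)).
Proof.
move=> hx i j.
have -> : (fun u => q_Qm (x u) i j) = (fun u => QE (x u) i j).
  by apply: funext => u; rewrite q_QmE.
by o4 i; o4 j; rewrite /QE /e4 /=; try apply: cwN; apply: hx.
Qed.

Lemma mdQ (t : R) (x : R -> 'cV[R]_4) x' : md t x x' -> md t (fun u => q_Qm (x u)) (q_Qm x').
Proof.
move=> hx i j.
have -> : (fun u => q_Qm (x u) i j) = (fun u => QE (x u) i j).
  by apply: funext => u; rewrite q_QmE.
by rewrite q_QmE; o4 i; o4 j; rewrite /QE /e4 /=; try apply: isdN; apply: hx.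
Qed.

Lemma nsq_sum n (x : 'cV[R]_n) : nsq x = \sum_i x i 0 ^+ 2.
Proof. by rewrite /nsq mxE; apply: eq_bigr => i _; rewrite mxE expr2. Qed.

Lemma nsq_ge0 n (x : 'cV[R]_n) : 0 <= nsq x.
Proof. by rewrite nsq_sum sumr_ge0 // => i _; rewrite sqr_ge0. Qed.

Lemma enorm_nsq n (x : 'cV[R]_n) : q_enorm x = Num.sqrt (nsq x).
Proof. by rewrite /q_enorm nsq_sum (ord1 ord0). Qed.

Lemma Dbnd (M : 'M[R]_3) m0 cM CM c1 c2 (q s : 'cV[R]_4) :
  0 <= c1 -> c1 <= m0 -> c1 <= cM -> m0 <= c2 -> CM <= c2 ->
  (forall w : 'cV[R]_3, cM * (w^T *m w) 0 0 <= (w^T *m M *m w) 0 0 /\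
                        (w^T *m M *m w) 0 0 <= CM * (w^T *m w) 0 0) ->
  nsq q = 1 ->
  c1 * nsq s <= (s^T *m (q_Qm q *m Nm M m0 *m (q_Qm q)^T) *m s) 0 0 /\
  (s^T *m (q_Qm q *m Nm M m0 *m (q_Qm q)^T) *m s) 0 0 <= c2 * nsq s.
Proof.
move=> c10 c1m c1M m2 M2 hM hq.
set z := (q_Qm q)^T *m s.
have -> : s^T *m (q_Qm q *m Nm M m0 *m (q_Qm q)^T) *m s = z^T *m Nm M m0 *m z.
  by rewrite /z trmx_mul trmxK !mulmxA.
have nz : nsq s = nsq z.
  rewrite /nsq /z trmx_mul trmxK !mulmxA -[_ *m q_Qm q *m _]mulmxA I2' hq scale1r mulmx1 //.
rewrite nz I6 I7.
have [h1 h2] := hM (q_vecp z).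
rewrite -/(nsq _) in h1 h2.
have ha := sqr_ge0 (e4 z 0).
have hb := nsq_ge0 (q_vecp z).
move: h1 h2 ha hb; set a := e4 z 0 ^+ 2; set b := nsq (q_vecp z); set w := ((q_vecp z)^T *m M *m q_vecp z) 0 0.
move=> h1 h2 ha hb.
split; nra.
Qed.

Lemma isd_loc_cst (f : R -> R) (u t0 c : R) : t0 < u -> (forall v, t0 < v -> f v = c) -> is_derive u (1:R) f 0.
Proof.
move=> hu hf.
have hc : is_derive u (1:R) (cst c) 0 by exact: is_derive_cst.
apply: (near_eq_is_derive _ hc).
near=> v; rewrite /= hf //.
by near: v; exact: lt_nbhsr hu.
Unshelve. all: by end_near.
Qed.

End Main.

Section Final.
Import numFieldNormedType.Exports.
Local Open Scope classical_set_scope.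
Local Set Implicit Arguments. Local Unset Strict Implicit.

Lemma lemma6_aux (R : realType) (M : 'M[R]_3) (m0 lam : R) (Kr : 'M[R]_4) :
  sym_posdef M ->
  (exists2 a : R, eigenvalue M a & a <= m0) ->
  (exists2 b : R, eigenvalue M b & m0 <= b) ->
  0 < lam ->
  sym_posdef Kr ->
  exists k : R, exists gamma : R, [/\ 0 < k, 0 < gamma &
    forall (t0 : R) (q dq ddq : R -> 'cV[R]_4),
      closed_loop_solution M m0 lam Kr t0 q dq ddq ->
      forall t, t0 <= t ->
        q_enorm (s_of lam (q t) (dq t))
        <= k * q_enorm (s_of lam (q t0) (dq t0)) * expR (- gamma * (t - t0))].
Proof.
move=> [MT Mpd] [a ea am0] _ lam0 [KT Kpd].
have a0 : 0 < a.
  move/eigenvalueP: ea => [v hv v0].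
  have hx : v^T != 0 by apply: contra v0 => /eqP h; rewrite -[v]trmxK h trmx0.
  have := Mpd _ hx; rewrite trmxK.
  have -> : v *m M *m v^T = a *: (v *m v^T) by rewrite hv -scalemxAl.
  rewrite entZ => h.
  have := nsq_gt0 v0; rewrite /fq mulmx1 => h2.
  by rewrite pmulr_lgt0 in h.
have m00 : 0 < m0 := lt_le_trans a0 am0.
have [cM [CM [cM0 hMb]]] := quad_bounds Mpd.
have [cK [CK [cK0 hKb]]] := quad_bounds Kpd.
pose c1 := Num.min m0 cM.
pose c2 := Num.max m0 CM.
have c1m : c1 <= m0 by rewrite /c1 ge_min lexx.
have c1M : c1 <= cM by rewrite /c1 ge_min lexx orbT.
have m2 : m0 <= c2 by rewrite /c2 le_max lexx.
have M2 : CM <= c2 by rewrite /c2 le_max lexx orbT.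
have c10 : 0 < c1 by rewrite /c1 lt_min m00 cM0.
have c20 : 0 < c2 := lt_le_trans m00 m2.
pose gam := cK / c2.
have gam0 : 0 < gam by rewrite divr_gt0.
exists (Num.sqrt (c2 / c1)), gam; split => //.
  by rewrite sqrtr_gt0 divr_gt0.
move=> t0 q dq ddq [hder hcont hnorm heq] t ht.
pose I := [set u : R | t0 <= u].
have nq : forall u, t0 <= u -> nsq (q u) = 1.
  move=> u hu; have := hnorm u hu; rewrite enorm_nsq => h.
  by rewrite -[nsq _]sqr_sqrtr ?nsq_ge0 // h expr1n.
pose N := Nm M m0.
pose Dm u := q_Qm (q u) *m N *m (q_Qm (q u))^T.
pose sf u := s_of lam (q u) (dq u).
pose V u := ((sf u)^T *m Dm u *m sf u) 0 0.
pose Kq u := ((sf u)^T *m Kr *m sf u) 0 0.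
pose E u := expR (2 * gam * (u - t0)).
pose W u := V u * E u.
pose dW u := V u * (E u * (2 * gam)) + E u * (-2 * Kq u).
have mdq : forall u, t0 < u -> md u q (dq u).
  by move=> u hu i j; rewrite (ord1 j); exact: (hder u hu i).1.
have mddq : forall u, t0 < u -> md u dq (ddq u).
  by move=> u hu i j; rewrite (ord1 j); exact: (hder u hu i).2.
have mcq : mc I q by move=> i j; rewrite (ord1 j); exact: (hcont i).1.
have mcdq : mc I dq by move=> i j; rewrite (ord1 j); exact: (hcont i).2.
have qdq : forall u, t0 < u -> ((q u)^T *m dq u) 0 0 = 0.
  move=> u hu.
  have h2 := mdM (mdT (mdq u hu)) (mdq u hu) 0 0.
  have h3 : is_derive u (1:R) (fun v => ((q v)^T *m q v) 0 0) 0.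
    by apply: (isd_loc_cst (c := 1) hu) => v hv; rewrite -/(nsq (q v)) nq // ltW.
  have := @derive_val _ _ _ _ _ _ _ h2; rewrite (@derive_val _ _ _ _ _ _ _ h3) entD => e.
  have e2 : ((dq u)^T *m q u) 0 0 = ((q u)^T *m dq u) 0 0.
    by rewrite trsc trmx_mul trmxK.
  rewrite e2 in e.
  lra.
have mdV : forall u, t0 < u -> is_derive u (1:R) V (-2 * Kq u).
  move=> u hu.
  have hq0 : is_derive u (1:R) (fun v => q_sc (q v)) (q_sc (dq u)) := mdq u hu ord0 ord0.
  have hX := mdD (mdZ hq0 (mdq u hu)) (mdN (md_cst u (@q_one4 R))).
  have hs0 := mdD (mddq u hu) (mdZ (isd_cst u lam) hX).
  have hs : md u sf (ddq u + lam *: (q_sc (q u) *: dq u + q_sc (dq u) *: q u)).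
    move=> i j; have := hs0 i j; rewrite oppr0 addr0 scale0r addr0; exact.
  have hQ := mdQ (mdq u hu).
  have hD := mdM (mdM hQ (md_cst u N)) (mdT hQ).
  have hV := mdM (mdM (mdT hs) hD) hs 0 0.
  apply: (is_derive_eq hV).
  rewrite mulmx0 addr0 mulmxDl.
  have hk := key MT (nq u (ltW hu)) (qdq u hu) (heq u hu).
  exact: hk.
have hE : forall u, is_derive u (1:R) E (E u * (2 * gam)).
  move=> u.
  have hg : is_derive u (1:R) (fun v => 2 * gam * (v - t0)) (2 * gam).
    have h := isdM (isd_cst u (2 * gam)) (isdD (@is_derive_id _ _ u 1) (isd_cst u (- t0))).
    by apply: (is_derive_eq h); rewrite addr0 mulr0 addr0 mulr1.
  exact: (is_derive1_comp (is_derive_expR _) hg).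
have dWd : forall u, t0 < u -> is_derive u (1:R) W (dW u).
  by move=> u hu; exact: (isdM (mdV u hu) (hE u)).
have dWle : forall u, t0 < u -> dW u <= 0.
  move=> u hu.
  have hb := @Dbnd R M m0 cM CM c1 c2 (q u) (sf u) (ltW c10) c1m c1M m2 M2 hMb (nq u (ltW hu)).
  have hV : V u <= c2 * nsq (sf u) := hb.2.
  have hK : cK * nsq (sf u) <= Kq u := (hKb (sf u)).1.
  have h1 : gam * V u <= Kq u.
    apply: le_trans (ler_wpM2l (ltW gam0) hV) _.
    by rewrite mulrA /gam divfK ?gt_eqF.
  have -> : dW u = (2 * E u) * (gam * V u - Kq u) by rewrite /dW; ring.
  by rewrite pmulr_rle0 ?subr_le0 // mulr_gt0 // expR_gt0.
have cV : cw I V.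
  have hq0c : cw I (fun v => q_sc (q v)) := mcq ord0 ord0.
  have hsc : mc I sf := mcD mcdq (mcZ (@cw_cst R I lam) (mcD (mcZ hq0c mcq) (mcN (@mc_cst R I 4 1 (@q_one4 R))))).
  have hQc := mcQ mcq.
  have hDc : mc I Dm := mcM (mcM hQc (@mc_cst R I 4 4 N)) (mcT hQc).
  have hh := mcM (mcM (mcT hsc) hDc) hsc. exact (hh 0 0).
have cE : cw I E.
  apply: continuous_subspaceT => x.
  apply: differentiable_continuous; apply/derivable1_diffP.
  by case: (hE x).
have cW : cw I W := cwM cV cE.
have cWt : {within `[t0, t], continuous W}.
  apply: (continuous_subspaceW _ cW) => x /=.
  by rewrite in_itv /= => /andP[].
have Wle : W t <= W t0.
  move: ht; rewrite le_eqVlt => /predU1P [<-|htt]; first exact: lexx.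
  have dWd' : forall x, x \in `]t0, t[%R -> is_derive x (1:R) W (dW x).
    by move=> x; rewrite in_itv /= => /andP[hx _]; exact: dWd.
  have [c hc he] := MVT htt dWd' cWt.
  have hc0 : t0 < c by move: hc; rewrite in_itv /= => /andP[].
  rewrite -subr_le0 he.
  by apply: mulr_le0_ge0; [exact: dWle | rewrite subr_ge0 ltW].
have Wt0 : W t0 = V t0 by rewrite /W /E subrr mulr0 expR0 mulr1.
have hlo := (@Dbnd R M m0 cM CM c1 c2 (q t) (sf t) (ltW c10) c1m c1M m2 M2 hMb (nq t ht)).1.
have hup := (@Dbnd R M m0 cM CM c1 c2 (q t0) (sf t0) (ltW c10) c1m c1M m2 M2 hMb (nq t0 (lexx t0))).2.
rewrite !enorm_nsq.
have Et0 : 0 < E t by exact: expR_gt0.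
move: hlo hup Wle; rewrite Wt0 /W -/(V t) -/(V t0).
set X := nsq (sf t); set Y := nsq (sf t0); set e := expR (- gam * (t - t0)).
move=> hlo hup Wle.
have e0 : 0 < e by exact: expR_gt0.
have eE : e ^+ 2 * E t = 1.
  rewrite /e /E -expRM_natl -expRD.
  have -> : 2%:R * (- gam * (t - t0)) + 2 * gam * (t - t0) = 0 by ring.
  exact: expR0.
have hX : X <= c2 / c1 * Y * e ^+ 2.
  have h1 : c1 * X * E t <= c2 * Y.
    apply: le_trans hup; apply: le_trans Wle.
    by apply: ler_wpM2r; [exact: ltW | exact: hlo].
  have -> : X = c1 * X * E t * (e ^+ 2 / c1).
    have -> : c1 * X * E t * (e ^+ 2 / c1) = X * (e ^+ 2 * E t) * (c1 / c1) by ring.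
    by rewrite eE divff ?gt_eqF // !mulr1.
  have -> : c2 / c1 * Y * e ^+ 2 = c2 * Y * (e ^+ 2 / c1) by ring.
  apply: ler_wpM2r => //.
  by rewrite divr_ge0 // ?sqr_ge0 // ltW.
have hY : 0 <= Y by exact: nsq_ge0.
have hc : 0 <= c2 / c1 by rewrite divr_ge0 // ltW.
have hcY : 0 <= c2 / c1 * Y by rewrite mulr_ge0.
rewrite -[e](ger0_norm (ltW e0)) -sqrtr_sqr -(sqrtrM _ hc) -(sqrtrM _ hcY).
exact: ler_wsqrtr.
Qed.

End Final.

Theorem lemma6 (R : realType) (M : 'M[R]_3) (m0 lam : R) (Kr : 'M[R]_4) :
  sym_posdef M ->
  (exists2 a : R, eigenvalue M a & a <= m0) ->
  (exists2 b : R, eigenvalue M b & m0 <= b) ->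
  0 < lam ->
  sym_posdef Kr ->
  exists k : R, exists gamma : R, [/\ 0 < k, 0 < gamma &
    forall (t0 : R) (q dq ddq : R -> 'cV[R]_4),
      closed_loop_solution M m0 lam Kr t0 q dq ddq ->
      forall t, t0 <= t ->
        q_enorm (s_of lam (q t) (dq t))
        <= k * q_enorm (s_of lam (q t0) (dq t0)) * expR (- gamma * (t - t0))].
Proof. exact: lemma6_aux. Qed.
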